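(* Let $(M,g)$ be a compact Riemannian manifold, $\phi:M\to S^n$ a smooth map, $a\in(0,1)$ and $F(t)=(1+2t)^a$. Let $v\in\mathbb{R}^{n+1}\setminus\{0\}$ be such that $\phi_v=\langle v,\phi\rangle\geq0$ on $M$, and suppose the tensor $S_g(\phi)=\frac12|d\phi|^2g-\phi^*can$ is positive (i.e. $S_g(\phi)(X,X)\geq0$ for all $X\in TM$). Then for every $t\geq0$, $B\geq0$ on $M$, and $S_g^F(\gamma_t^v\circ\phi)(X,X)\geq\alpha_t^4\circ\phi\cdot S_g^F(\phi)(X,X)$ for all $X\in TM$.
   Context: $S^n\subset\mathbb{R}^{n+1}$ unit sphere with canonical metric $can$. For $v\ne0$, $\bar v(y)=v-\langle v,y\rangle y$, $(\gamma_t^v)$ its flow, $(\gamma_t^v)^*can=\alpha_t^2can$ with $\alpha_t(y)=\frac{|v|}{|v|\cosh t+\langle v,y\rangle\sinh t}$. The $F$ stress-energy tensor is $S_g^F(\psi)=F'\left(\frac{|d\psi|^2}{2}\right)\frac{|d\psi|^2}{2}g-\left[F'\left(\frac{|d\psi|^2}{2}\right)+\frac{|d\psi|^2}{2}F''\left(\frac{|d\psi|^2}{2}\right)\right]\psi^*can$. $B:=\left(\frac{F''(\alpha_t^2\circ\phi\cdot\frac{|d\phi|^2}{2})}{F'(\alpha_t^2\circ\phi\cdot\frac{|d\phi|^2}{2})}\alpha_t^2\circ\phi-\frac{F''(\frac{|d\phi|^2}{2})}{F'(\frac{|d\phi|^2}{2})}\right)\phi_v$. *)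

(* Defs.v *)
From mathcomp Require Import all_boot all_order all_algebra.
From mathcomp Require Import all_classical all_reals all_analysis.
Set Implicit Arguments. Unset Strict Implicit. Unset Printing Implicit Defensive.
Import Order.TTheory GRing.Theory Num.Theory.
Local Open Scope ring_scope.

Section Defs.
Variable R : realType.

Definition coshr (t : R) : R := (expR t + expR (- t)) / 2.
Definition sinhr (t : R) : R := (expR t - expR (- t)) / 2.

Definition dot k (u w : 'rV[R]_k) : R := \sum_(i < k) u 0 i * w 0 i.
Definition enorm k (u : 'rV[R]_k) : R := Num.sqrt (dot u u).

Definition quad m (G : 'M[R]_m) (X : 'rV[R]_m) : R := (X *m G *m X^T) 0 0.

Definition conf_factor k (v : 'rV[R]_k) (t : R) (y : 'rV[R]_k) : R :=
  enorm v / (enorm v * coshr t + dot v y * sinhr t).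

(* The conformal flow gamma_t^v on S^k, in closed form (extended to a
   neighbourhood of the sphere in R^k).  It is the flow of y |-> u - <u,y> y. *)
Definition conf_flow k (v : 'rV[R]_k) (t : R) (y : 'rV[R]_k) : 'rV[R]_k :=
  let u := (enorm v)^-1 *: v in
  let w := dot u y in
  let al := (coshr t + w * sinhr t)^-1 in
  al *: (y - w *: u) + (al * (w * coshr t + sinhr t)) *: u.

Definition Fa (a : R) (s : R) : R := (1 + 2 * s) `^ a.
Definition F1 (a : R) : R -> R := derive1 (Fa a).
Definition F2 (a : R) : R -> R := derive1 (derive1 (Fa a)).

(* Energy density |d psi|^2/2 from metric matrix g (in a frame of T_xM)
   and the Gram matrix G_ij = <d psi e_i, d psi e_j>. *)
Definition half_energy m (g G : 'M[R]_m) : R := \tr (invmx g *m G) / 2.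

Definition gram m k (L : 'M[R]_(m, k)) : 'M[R]_m :=
  \matrix_(i, j) dot (row i L) (row j L).

(* differential of gamma_t^v o phi at x: rows e_i |-> d gamma (d phi e_i) *)
Definition dflow_comp m k (v : 'rV[R]_k) (t : R) (y : 'rV[R]_k) (L : 'M[R]_(m, k))
  : 'M[R]_(m, k) :=
  \matrix_(i, j) (derive (conf_flow v t) y (row i L)) 0 j.

(* F stress-energy tensor evaluated at (X,X), given e = |d psi|^2/2,
   gXX = g(X,X) and pXX = psi^*can(X,X) = |d psi X|^2. *)
Definition SF (F' F'' : R -> R) (e gXX pXX : R) : R :=
  F' e * e * gXX - (F' e + e * F'' e) * pXX.

Definition S0 (e gXX pXX : R) : R := e * gXX - pXX.

Definition Bq (F' F'' : R -> R) (al e phv : R) : R :=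
  (F'' (al ^+ 2 * e) / F' (al ^+ 2 * e) * al ^+ 2 - F'' e / F' e) * phv.

End Defs.

(* Main.v *)
Require Import Defs.
From mathcomp Require Import all_boot all_order all_algebra.
From mathcomp Require Import all_classical all_reals all_analysis.
From mathcomp Require Import ring lra.
Import Order.TTheory GRing.Theory Num.Theory numFieldNormedType.Exports.
Local Open Scope classical_set_scope.
Local Open Scope ring_scope.
Section Pw.
Context {R : realType}.

Lemma aff_der (s : R) : is_derive s 1 (fun z : R => 1 + 2 * z) 2.
Proof.
have H : is_derive s 1 (fun z : R => 1 + 2 * z) (0 + 2 *: (1:R)).
  apply: is_deriveD; apply: is_deriveZ.
by case: H => H1 H2; split => //; rewrite H2 add0r scaler1.
Qed.

Lemma pow_der (b c s : R) : 0 < 1 + 2 * s ->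
  is_derive s 1 (fun z : R => c * (1 + 2 * z) `^ b) (c * (b * (1 + 2 * s) `^ (b - 1) * 2)).
Proof.
move=> hs.
have H1 : is_derive s 1 ((@powR R ^~ b) \o (fun z : R => 1 + 2 * z)) (b * (1 + 2 * s) `^ (b - 1) * 2).
  apply: is_derive1_comp; last exact: aff_der.
  exact: is_derive1_powR.
have H2 := @is_deriveZ _ _ _ _ c s 1 _ H1.
by case: H2 => H3 H4; split.
Qed.

Lemma F1E (a s : R) : 0 < 1 + 2 * s -> F1 a s = a * (1 + 2 * s) `^ (a - 1) * 2.
Proof.
move=> hs; rewrite /F1 derive1E.
have H := pow_der a 1 s hs.
have -> : Fa a = (fun z : R => 1 * (1 + 2 * z) `^ a).
  by apply/funext => z; rewrite mul1r.
by rewrite derive_val mul1r.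
Qed.

Lemma F2E (a s : R) : 0 < 1 + 2 * s -> F2 a s = (a * 2) * ((a - 1) * (1 + 2 * s) `^ (a - 1 - 1) * 2).
Proof.
move=> hs; rewrite /F2 derive1E.
rewrite (@near_eq_derive _ _ _ _ (fun z : R => (a * 2) * (1 + 2 * z) `^ (a - 1))).
  by rewrite (derive_val (is_derive := pow_der (a - 1) (a * 2) s hs)).
have hs' : - 2^-1 < s by lra.
near=> z; rewrite -/(F1 a z) F1E; first by rewrite mulrAC.
near: z; apply: filterS (lt_nbhsr hs') => z hz; lra.
Unshelve. all: by end_near. Qed.

Lemma powdec (x y r : R) : 0 < x -> x <= y -> r < 0 -> y `^ r <= x `^ r.
Proof.
move=> x0 xy r0.
have y0 : 0 < y by apply: lt_le_trans xy.
have h : x `^ (- r) <= y `^ (- r).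
  apply: (@ge0_ler_powR _ (- r)) => //; rewrite ?nnegrE; [rewrite oppr_ge0|..]; exact: ltW.
have E z : z `^ r = (z `^ (- r))^-1 by rewrite -powRN opprK.
rewrite (E x) (E y) lef_pV2 // posrE powR_gt0 //.
Qed.

Lemma powm1 (x r : R) : 0 < x -> x `^ r = x `^ (r - 1) * x.
Proof.
move=> x0; rewrite -{3}(powRr1 (ltW x0)) -powRD; first by rewrite subrK.
by rewrite (gt_eqF x0) implybT.
Qed.

Lemma partB (a al e ph : R) : 0 < a < 1 -> 0 < al <= 1 -> 0 <= e -> 0 <= ph ->
  0 <= Bq (F1 a) (F2 a) al e ph.
Proof.
move=> /andP[a0 a1] /andP[al0 al1] e0 ph0.
have hA : 0 < 1 + 2 * (al ^+ 2 * e) by have := sqr_ge0 al; nra.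
have hB : 0 < 1 + 2 * e by lra.
rewrite /Bq !F1E // !F2E // (powm1 _ (a - 1) hA) (powm1 _ (a - 1) hB).
have PA := powR_gt0 (a - 1 - 1) hA; have PB := powR_gt0 (a - 1 - 1) hB.
set A := 1 + 2 * (al ^+ 2 * e) in hA PA *; set B := 1 + 2 * e in hB PB *.
set pA := A `^ (a - 1 - 1) in PA *; set pB := B `^ (a - 1 - 1) in PB *.
have -> : ((a * 2) * ((a - 1) * pA * 2) / (a * (pA * A) * 2) * al ^+ 2 -
   (a * 2) * ((a - 1) * pB * 2) / (a * (pB * B) * 2)) * ph
   = 2 * (1 - a) * (1 - al ^+ 2) / (A * B) * ph.
  rewrite /A /B; field.
  by rewrite !gt_eqF.

have h1 : 0 <= 1 - al ^+ 2 by nra.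
apply: mulr_ge0 => //; apply: divr_ge0; last by apply: mulr_ge0; apply: ltW.
apply: mulr_ge0 => //; lra.
Qed.

Lemma partS (a al e G p : R) : 0 < a < 1 -> 0 < al <= 1 -> 0 <= e -> 0 <= G ->
  0 <= p -> p <= e * G ->
  al ^+ 4 * SF (F1 a) (F2 a) e G p <= SF (F1 a) (F2 a) (al ^+ 2 * e) G (al ^+ 2 * p).
Proof.
move=> /andP[a0 a1] /andP[al0 al1] e0 G0 p0 pe.
have hA : 0 < 1 + 2 * (al ^+ 2 * e) by have := sqr_ge0 al; nra.
have hB : 0 < 1 + 2 * e by lra.
have AB : 1 + 2 * (al ^+ 2 * e) <= 1 + 2 * e.
  have : al ^+ 2 <= 1 by nra.
  nra.
have ha1 : a - 1 < 0 by lra.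
have ha2 : a - 1 - 1 < 0 by lra.
have QAB := powdec _ _ _ hA AB ha1.
have PAB := powdec _ _ _ hA AB ha2.
rewrite /SF !F1E // !F2E //.
rewrite (powm1 _ (a - 1) hA) (powm1 _ (a - 1) hB) in QAB *.
have PA := powR_gt0 (a - 1 - 1) hA; have PB := powR_gt0 (a - 1 - 1) hB.
set A := 1 + 2 * (al ^+ 2 * e) in hA PA AB QAB PAB *; set B := 1 + 2 * e in hB PB AB QAB PAB *.
set pA := A `^ (a - 1 - 1) in PA QAB PAB *; set pB := B `^ (a - 1 - 1) in PB QAB PAB *.
set lam := al ^+ 2.
have l0 : 0 < lam by rewrite /lam exprn_gt0.
have l1 : lam <= 1 by rewrite /lam; nra.
rewrite -subr_ge0.
have -> : a * (pA * A) * 2 * (lam * e) * G -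
   (a * (pA * A) * 2 + lam * e * (a * 2 * ((a - 1) * pA * 2))) * (lam * p) -
   al ^+ 4 * (a * (pB * B) * 2 * e * G - (a * (pB * B) * 2 + e * (a * 2 * ((a - 1) * pB * 2))) * p)
   = 2 * a * lam * ((pA * A - lam * (pB * B)) * (e * G - p) + 2 * lam * e * (1 - a) * (pA - pB) * p).
  rewrite /A /B /lam; ring.
have c0 : 0 <= pA * A - lam * (pB * B).
  have : 0 <= pB * B by apply: mulr_ge0; apply: ltW.
  nra.
apply: mulr_ge0; first by apply: mulr_ge0; [apply: mulr_ge0; lra | exact: ltW].
apply: addr_ge0; first by apply: mulr_ge0 => //; lra.
apply: mulr_ge0 => //; apply: mulr_ge0; last by lra.
apply: mulr_ge0; last by lra.
by apply: mulr_ge0 => //; apply: mulr_ge0 => //; lra.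
Qed.
End Pw.
Section Dr.
Context {R : realType}.
Context {k : nat}.
Notation V := 'rV[R]_k.

Lemma isdD (f g : V -> R) x h df dg : is_derive x h f df -> is_derive x h g dg ->
  is_derive x h (fun z => f z + g z) (df + dg).
Proof. move=> H1 H2; exact: is_deriveD. Qed.

Lemma isdM (f g : V -> R) x h df dg : is_derive x h f df -> is_derive x h g dg ->
  is_derive x h (fun z => f z * g z) (f x * dg + g x * df).
Proof. move=> H1 H2; exact: is_deriveM. Qed.

Lemma isdV (f : V -> R) x h df : f x != 0 -> is_derive x h f df ->
  is_derive x h (fun z => (f z)^-1) (- (f x) ^-2 * df).
Proof.
move=> fx [H1 H2]; split; first exact: derivableV.
by rewrite deriveV // H2.
Qed.

Arguments isdD {f g x h df dg}.
Arguments isdM {f g x h df dg}.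
Arguments isdV {f x h df}.
Lemma isdC (c : R) x h : is_derive x h (fun _ : V => c) 0.
Proof. exact: is_derive_cst. Qed.

Lemma isd_lin (f : V -> R) x h L : (forall e : R, f (e *: h + x) = f x + e * L) ->
  is_derive x h f L.
Proof.
move=> Hf.
have key : forall e : R, e != 0 -> e^-1 *: ((f \o shift x) (e *: h) - f x) = L.
  move=> e e0; rewrite /= Hf addrC addKr /GRing.scale /= mulrA mulVf ?mul1r //.
have E : {near (0:R)^', (fun _ => L) =1 (fun e : R => e^-1 *: ((f \o shift x) (e *: h) - f x))}.
  near=> e; rewrite key //.
  by near: e; exact: nbhs_dnbhs_neq.
split.
  rewrite /derivable; apply/cvg_ex; exists L.
  apply: (cvg_trans (near_eq_cvg E)); exact: cvg_cst.
rewrite /derive; apply: cvg_lim => //.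
apply: (cvg_trans (near_eq_cvg E)); exact: cvg_cst.
Unshelve. all: by end_near. Qed.


Lemma dotC (x z : V) : dot x z = dot z x.
Proof. by apply: eq_bigr => i _; rewrite mulrC. Qed.
Lemma dotDl (x y z : V) : dot (x + y) z = dot x z + dot y z.
Proof. by rewrite /dot -big_split; apply: eq_bigr => i _; rewrite mxE mulrDl. Qed.
Lemma dotZl a (x z : V) : dot (a *: x) z = a * dot x z.
Proof. by rewrite /dot mulr_sumr; apply: eq_bigr => i _; rewrite mxE mulrA. Qed.
Lemma dotDr (x y z : V) : dot z (x + y) = dot z x + dot z y.
Proof. by rewrite dotC dotDl !(dotC z). Qed.
Lemma dotZr a (x z : V) : dot z (a *: x) = a * dot z x.
Proof. by rewrite dotC dotZl dotC. Qed.
Lemma dot_ge0 (x : V) : 0 <= dot x x.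
Proof. by rewrite /dot sumr_ge0 // => i _; rewrite -expr2 sqr_ge0. Qed.

Lemma dcoord y h j : is_derive y h (fun z : V => z 0 j) (h 0 j).
Proof. by apply: isd_lin => e; rewrite !mxE addrC. Qed.
Lemma ddot (w : V) y h : is_derive y h (fun z : V => dot w z) (dot w h).
Proof. by apply: isd_lin => e; rewrite dotDr dotZr addrC. Qed.

Lemma dot_alg (U y h1 h2 : V) (c s : R) : c + dot U y * s != 0 -> dot U U = 1 -> c^+2 - s^+2 = 1 ->
  dot y y = 1 -> dot h1 y = 0 -> dot h2 y = 0 ->
  dot ((c + dot U y * s)^-1 *: h1 + (- (s * dot U h1) / (c + dot U y * s)^+2) *: y
    + (dot U h1 * (c^+2 - c - s^+2) / (c + dot U y * s)^+2) *: U)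
      ((c + dot U y * s)^-1 *: h2 + (- (s * dot U h2) / (c + dot U y * s)^+2) *: y
    + (dot U h2 * (c^+2 - c - s^+2) / (c + dot U y * s)^+2) *: U) =
  ((c + dot U y * s)^-1)^+2 * dot h1 h2.
Proof.
move=> D0 uu Hcs yy h1y h2y.
rewrite !dotDl !dotDr !dotZl !dotZr (dotC y h2) (dotC h1 U) (dotC y U) uu yy h1y h2y.
move: D0; set w0 := dot U y; set w1 := dot U h1; set w2 := dot U h2; set D := c + w0 * s => D0.
apply/eqP; rewrite -subr_eq0; apply/eqP.
transitivity (w1 * w2 / D^+4 * ((c^+2 - s^+2) * (c^+2 - s^+2 - 1))).
  rewrite /D; by field.
by rewrite Hcs subrr !mulr0.
Qed.

Section Flow.
Variables (v : V) (t : R).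
Let u := (enorm v)^-1 *: v.
Let c := coshr t.
Let s := sinhr t.

Lemma flowE z j : conf_flow v t z 0 j =
  (c + dot u z * s)^-1 * (z 0 j - dot u z * u 0 j) +
  (c + dot u z * s)^-1 * (dot u z * c + s) * u 0 j.
Proof. by rewrite /conf_flow !mxE. Qed.

Lemma dentry y h j : c + dot u y * s != 0 ->
  is_derive y h (fun z => conf_flow v t z 0 j)
   ((c + dot u y * s)^-1 * h 0 j + (- (s * dot u h) / (c + dot u y * s)^+2) * y 0 j
    + (dot u h * (c^+2 - c - s^+2) / (c + dot u y * s)^+2) * u 0 j).
Proof.
move=> D0.
have HD := isdD (isdC c y h) (isdM (ddot u y h) (isdC s y h)).
have HV := isdV D0 HD.
have H := isdD (isdM HV (isdD (dcoord y h j) (isdM (isdC (-1) y h) (isdM (ddot u y h) (isdC (u 0 j) y h)))))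
   (isdM (isdM HV (isdD (isdM (ddot u y h) (isdC c y h)) (isdC s y h))) (isdC (u 0 j) y h)).
have -> : (fun z => conf_flow v t z 0 j) = (fun z => (c + dot u z * s)^-1 * (z 0 j + (-1) * (dot u z * u 0 j)) +
  (c + dot u z * s)^-1 * (dot u z * c + s) * u 0 j).
  by apply/funext => z; rewrite flowE mulN1r.
apply: (is_derive_eq H); rewrite /=.
by field.
Qed.


Lemma dflowE y h : c + dot u y * s != 0 ->
  derive (conf_flow v t) y h =
   (c + dot u y * s)^-1 *: h + (- (s * dot u h) / (c + dot u y * s)^+2) *: y
    + (dot u h * (c^+2 - c - s^+2) / (c + dot u y * s)^+2) *: u.
Proof.
move=> D0; rewrite derive_mx; last first.
  by apply/derivable_mxP => i j; rewrite (ord1 i); case: (dentry y h j D0).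
apply/matrixP => i j; rewrite (ord1 i) [LHS]mxE.
have [_ ->] := dentry y h j D0; by rewrite !mxE.
Qed.

Lemma dflow_dot y h1 h2 : c + dot u y * s != 0 -> dot u u = 1 -> c^+2 - s^+2 = 1 ->
  dot y y = 1 -> dot h1 y = 0 -> dot h2 y = 0 ->
  dot (derive (conf_flow v t) y h1) (derive (conf_flow v t) y h2) =
  ((c + dot u y * s)^-1)^+2 * dot h1 h2.
Proof.
move=> D0 uu Hcs yy h1y h2y; rewrite !dflowE //; exact: dot_alg.
Qed.
End Flow.
End Dr.

Section Glue.
Context {R : realType}.

Lemma dot_gt0 k (x : 'rV[R]_k) : x != 0 -> 0 < dot x x.
Proof.
move=> x0; rewrite lt_def dot_ge0 andbT; apply: contra x0 => /eqP H.
have H' : forall j, x 0 j * x 0 j = 0.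
  move=> j; apply: (psumr_eq0P _ H) => // i _; by rewrite -expr2 sqr_ge0.
apply/eqP/rowP => j; rewrite mxE; have := H' j.
by rewrite -expr2 => /eqP; rewrite sqrf_eq0 => /eqP.
Qed.

Lemma enorm_gt0 k (v : 'rV[R]_k) : v != 0 -> 0 < enorm v.
Proof. by move=> v0; rewrite /enorm sqrtr_gt0 dot_gt0. Qed.

Arguments dot_gt0 {k x}.
Arguments enorm_gt0 {k v}.
Lemma dotuu k (v : 'rV[R]_k) : v != 0 -> dot ((enorm v)^-1 *: v) ((enorm v)^-1 *: v) = 1.
Proof.
move=> v0; have n0 := enorm_gt0 v0.
have E : enorm v ^+ 2 = dot v v by rewrite /enorm sqr_sqrtr // dot_ge0.
rewrite dotZl dotZr -E; field; by rewrite gt_eqF.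
Qed.

Lemma cosh_sinh (t : R) : coshr t ^+ 2 - sinhr t ^+ 2 = 1.
Proof.
have E : expR t * expR (- t) = 1 by rewrite -expRD subrr expR0.
rewrite /coshr /sinhr; transitivity (expR t * expR (- t)); last exact: E.
by field.
Qed.

Lemma cosh_ge1 (t : R) : 1 <= coshr t.
Proof.
have E : expR t * expR (- t) = 1 by rewrite -expRD subrr expR0.
have h1 := expR_gt0 t; have h2 := expR_gt0 (- t).
rewrite /coshr; set x := expR t in E h1 *; set y := expR (- t) in E h2 *.
have h3 : 0 <= (x - 1) ^+ 2 * y by apply: mulr_ge0; [exact: sqr_ge0 | exact: ltW].
have h4 : (x - 1) ^+ 2 * y = x * (x * y) - 2 * (x * y) + y by ring.
rewrite h4 E in h3; lra.
Qed.

Lemma sinh_ge0 (t : R) : 0 <= t -> 0 <= sinhr t.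
Proof.
move=> t0; rewrite /sinhr; apply: divr_ge0; last by [].
by rewrite subr_ge0 ler_expR; lra.
Qed.

Lemma dot_mulmx m k (X : 'rV[R]_m) (L : 'M[R]_(m, k)) (y : 'rV[R]_k) :
  dot (X *m L) y = \sum_i X 0 i * dot (row i L) y.
Proof.
rewrite /dot; under eq_bigr do rewrite mxE big_distrl /=.
rewrite exchange_big; apply: eq_bigr => i _; rewrite mulr_sumr.
by apply: eq_bigr => j _; rewrite mxE mulrA.
Qed.

Lemma row_dflow m k (v : 'rV[R]_k) t y (L : 'M[R]_(m, k)) i :
  row i (dflow_comp v t y L) = derive (conf_flow v t) y (row i L).
Proof. by apply/rowP => j; rewrite !mxE. Qed.

Lemma half_energyZ m (g G : 'M[R]_m) c :
  half_energy g (c *: G) = c * half_energy g G.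
Proof. by rewrite /half_energy -scalemxAr mxtraceZ mulrA. Qed.

Lemma quad_ge0 m (g : 'M[R]_m) :
  (forall X, X != 0 -> 0 < quad g X) -> forall X, 0 <= quad g X.
Proof.
move=> H X; have [->|X0] := eqVneq X 0; last exact: ltW (H X X0).
by rewrite /quad !mul0mx mxE.
Qed.

Lemma energy_ge0 m (g G : 'M[R]_m) (p : 'rV[R]_m -> R) :
  (forall X, X != 0 -> 0 < quad g X) -> (forall X, 0 <= p X) ->
  (forall X, 0 <= half_energy g G * quad g X - p X) -> 0 <= half_energy g G.
Proof.
case: m g G p => [|m] g G p Hq Hp HS.
  by rewrite /half_energy /mxtrace big_ord0 mul0r.
have X0 : (const_mx 1 : 'rV[R]_m.+1) != 0.
  apply/eqP => /matrixP /(_ 0 0); rewrite !mxE => /eqP; by rewrite oner_eq0.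
have := Hq _ X0; have := Hp (const_mx 1); have := HS (const_mx 1).
set e := half_energy g G; set q := quad g _; set pp := p _.
move=> h1 h2 h3.
have : 0 <= e * q by lra.
by rewrite pmulr_lge0.
Qed.

End Glue.

Theorem mainTheorem5 (R : realType) (m n : nat) (M : Type)
  (g : M -> 'M[R]_m) (phi : M -> 'rV[R]_n.+1) (dphi : M -> 'M[R]_(m, n.+1))
  (a : R) (v : 'rV[R]_n.+1) :
  (forall x, (g x)^T = g x) ->
  (forall x (X : 'rV[R]_m), X != 0 -> 0 < quad (g x) X) ->
  (forall x, dot (phi x) (phi x) = 1) ->
  (forall x (i : 'I_m), dot (row i (dphi x)) (phi x) = 0) ->
  0 < a < 1 ->
  v != 0 ->
  (forall x, 0 <= dot v (phi x)) ->
  (forall x (X : 'rV[R]_m),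
     0 <= S0 (half_energy (g x) (gram (dphi x))) (quad (g x) X)
             (dot (X *m dphi x) (X *m dphi x))) ->
  forall t : R, 0 <= t ->
  forall x : M,
    0 <= Bq (F1 a) (F2 a) (conf_factor v t (phi x))
            (half_energy (g x) (gram (dphi x))) (dot v (phi x))
    /\
    forall X : 'rV[R]_m,
      conf_factor v t (phi x) ^+ 4 *
        SF (F1 a) (F2 a) (half_energy (g x) (gram (dphi x))) (quad (g x) X)
           (dot (X *m dphi x) (X *m dphi x))
      <=
      SF (F1 a) (F2 a)
         (half_energy (g x) (gram (dflow_comp v t (phi x) (dphi x)))) (quad (g x) X)
         (dot (derive (conf_flow v t) (phi x) (X *m dphi x))
              (derive (conf_flow v t) (phi x) (X *m dphi x))).
Proof.
move=> _ Hq Hsph Htan Ha v0 Hv HS t t0 x.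
set y := phi x; set L := dphi x.
set nv := enorm v; set u := nv^-1 *: v.
set c := coshr t; set s := sinhr t.
have nv0 : 0 < nv by exact: enorm_gt0.
have c1 : 1 <= c := cosh_ge1 t.
have s0 : 0 <= s := sinh_ge0 t t0.
have wy : 0 <= dot u y by rewrite /u dotZl; apply: mulr_ge0; [rewrite invr_ge0 ltW | exact: Hv].
have D1 : 1 <= c + dot u y * s.
  have : 0 <= dot u y * s by exact: mulr_ge0.
  lra.
have D0 : c + dot u y * s != 0 by rewrite gt_eqF //; lra.
have Hal : conf_factor v t y = (c + dot u y * s)^-1.
  rewrite /conf_factor -/nv -/c -/s.
  have -> : nv * c + dot v y * s = nv * (c + dot u y * s).
    rewrite /u dotZl; field; by rewrite gt_eqF.
  by rewrite invfM mulrA mulfV ?mul1r // gt_eqF.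
set al := (c + dot u y * s)^-1 in Hal.
have al0 : 0 < al by rewrite /al invr_gt0; lra.
have al1 : al <= 1 by rewrite /al invf_le1; lra.
have uu : dot u u = 1 by exact: dotuu.
have Hcs : c ^+ 2 - s ^+ 2 = 1 := cosh_sinh t.
have He := energy_ge0 _ _ _ _ (Hq x) (fun X => dot_ge0 (X *m L)) (HS x).
rewrite Hal; split.
  by apply: partB => //; [rewrite al0 al1 | exact: Hv].
move=> X.
have tanX : dot (X *m L) y = 0.
  by rewrite dot_mulmx big1 // => i _; rewrite Htan mulr0.
have Hgram : gram (dflow_comp v t y L) = al ^+ 2 *: gram L.
  apply/matrixP => i j; rewrite [LHS]mxE [RHS]mxE [X in _ = _ * X]mxE.
  rewrite !row_dflow (dflow_dot v t) //; (exact: Htan || exact: Hsph).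
rewrite Hgram half_energyZ (dflow_dot v t) //; try (exact: Htan || exact: Hsph).
have Sx := HS x X; rewrite /S0 in Sx.
apply: partS => //; first by rewrite al0 al1.
- exact: quad_ge0 (Hq x) X.
- exact: dot_ge0.
- lra.
Qed.
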